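(* For every positive integer $\alpha$, there is no function $f$ such that $\mathrm{ecrw}_\alpha(G)\le f(\mathrm{tcw}(G))$ for all graphs $G$. (Indeed, for every $k$ the graph $G^{\alpha+1}_k$ has tree-cut width at most $\alpha+1$, while $\{G^{\alpha+1}_k:k\in\mathbb N\}$ has unbounded $\alpha$-edge-crossing width.)
   Context: For positive integers $n,k$, the graph $G^n_k$ has vertex set $A\cup B_k$ where $A=\{a_1,\dots,a_n\}$ and $B_k=\{(W,\ell): W\subseteq A,\ |W|=2,\ \ell\in[k]\}$, with $a\in A$ adjacent to $(W,\ell)$ iff $a\in W$, and no other edges. A tree-cut decomposition of a graph $G$ is a pair $\mathcal{T}=(T,\{X_t\}_{t\in V(T)})$ where $T$ is a tree and the bags $X_t\subseteq V(G)$ are pairwise disjoint (possibly empty) with $\bigcup_{t\in V(T)}X_t=V(G)$. For a node $t$ of $T$, let $T_1,\dots,T_m$ be the connected components of $T-t$ and $Z_i=\bigcup_{s\in V(T_i)}X_s$; $\mathrm{cross}_{\mathcal{T}}(t)$ is the number of edges of $G$ whose two endpoints lie in two distinct sets among $Z_1,\dots,Z_m$ (if $T$ has one node, $\mathrm{cross}_{\mathcal T}(t)=0$). The crossing number of $\mathcal{T}$ is $\max_{t}\mathrm{cross}_{\mathcal{T}}(t)$, and the thickness of $\mathcal{T}$ is $\max_t|X_t|$. $\mathrm{ecrw}_\alpha(G)$ is the minimum crossing number over tree-cut decompositions of $G$ of thickness at most $\alpha$. For an edge $uv$ of $T$, the adhesion $\mathrm{adh}_{\mathcal T}(uv)$ is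 the set of edges of $G$ joining $\bigcup_{s\in V(T_{uv,u})}X_s$ and $\bigcup_{s\in V(T_{uv,v})}X_s$, where $T_{uv,u},T_{uv,v}$ are the components of $T-uv$ containing $u,v$. The torso $H_t$ at $t$ is $G$ if $|V(T)|=1$, and otherwise is obtained from $G$ by consolidating each $Z_i$ into a single vertex $z_i$ (replace $Z_i$ by $z_i$ and, for each edge between $Z_i$ and $v\notin Z_i$, add an edge $z_iv$; multi-edges allowed). The 3-center $\widetilde{H_t}$ is obtained from $H_t$ by exhaustively suppressing vertices of $V(H_t)\setminus X_t$ of degree at most 2 (suppressing $v$: delete $v$, and if it had degree exactly 2 add an edge between its two neighbours). The tree-cut width of $\mathcal T$ is $\max(\max_{uv\in E(T)}|\mathrm{adh}_{\mathcal T}(uv)|,\max_{t}|V(\widetilde{H_t})|)$, and $\mathrm{tcw}(G)$ is its minimum over all tree-cut decompositions of $G$. *)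

(* Defs.v *)
(* Graphs: a finite simple graph is a symmetric irreflexive
   relation G : rel V on a finType V. Edges are the 2-sets [set x; y] with G x y. *)
From mathcomp Require Import all_boot.
Set Implicit Arguments. Unset Strict Implicit. Unset Printing Implicit Defensive.

Definition del_edge (tT : finType) (tE : rel tT) (a b : tT) : rel tT :=
  [rel x y | tE x y && ([set x; y] != [set a; b])].

(* tT with relation tE is a (nonempty, finite) tree: connected, and every
   edge is a bridge (acyclic) *)
Definition is_tree (tT : finType) (tE : rel tT) : Prop :=
  [/\ 0 < #|tT|, symmetric tE, irreflexive tE,
      (forall a b, connect tE a b) &
      (forall a b, tE a b -> ~~ connect (del_edge tE a b) a b)].

Definition Tminus (tT : finType) (tE : rel tT) (t : tT) : rel tT :=
  [rel a b | [&& tE a b, a != t & b != t]].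

Definition is_tcd (V : finType) (G : rel V) (tT : finType) (tE : rel tT)
    (X : tT -> {set V}) : Prop :=
  [/\ is_tree tE,
      (forall s t, s != t -> [disjoint X s & X t]) &
      \bigcup_(t : tT) X t = [set: V]].

Section TCD.
Variables (V : finType) (G : rel V) (tT : finType) (tE : rel tT)
          (X : tT -> {set V}).

Definition cross (t : tT) : nat :=
  #|[set e : {set V} | [exists x, exists y,
      [&& G x y, e == [set x; y] &
       [exists s1, exists s2,
         [&& x \in X s1, y \in X s2, s1 != t, s2 != t &
             ~~ connect (Tminus tE t) s1 s2]]]]]|.

Definition side (u v : tT) : {set V} :=
  [set x | [exists s, (x \in X s) && connect (del_edge tE u v) u s]].

Definition adh (u v : tT) : nat :=
  #|[set e : {set V} | [exists x, exists y,
      [&& G x y, e == [set x; y], x \in side u v & y \in side v u]]]|.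

(* Vertices of a torso: inl x for x in X t, and inr C for a component C
   (a set of tree nodes) of T - t, standing for the consolidated vertex z_C. *)
Definition TW := (V + {set tT})%type.

Definition compT (t s : tT) : {set tT} :=
  [set r | (r != t) && connect (Tminus tE t) s r].

Definition phi (t : tT) (u : V) : TW :=
  if u \in X t then inl u
  else inr [set r | (r != t) &&
                    [exists s, (u \in X s) && connect (Tminus tE t) s r]].

Definition torso_V (t : tT) : {set TW} :=
  ((fun x => inl x : TW) @: X t) :|:
  ((fun s => inr (compT t s) : TW) @: (~: [set t])).

(* multigraph edges: a multiset of ordered pairs, every undirected edge being
   listed in both orientations (a loop at w appears as (w,w) twice) *)
Definition torso_E (t : tT) : seq (TW * TW) :=
  [seq (phi t p.1, phi t p.2) |
     p <- enum [pred p : V * V | G p.1 p.2] & phi t p.1 != phi t p.2].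

End TCD.

Section Suppress.
Variable W : finType.

(* degree (a loop counts twice) *)
Definition mdeg (E : seq (W * W)) (v : W) : nat := count (fun p => p.1 == v) E.

Definition nbrs (E : seq (W * W)) (v : W) : seq W := [seq p.2 | p <- E & p.1 == v].

Definition suppress (E : seq (W * W)) (v : W) : seq (W * W) :=
  let L := nbrs E v in
  [seq p <- E | (p.1 != v) && (p.2 != v)] ++
  (if (size L == 2) && (v \notin L)
   then [:: (nth v L 0, nth v L 1); (nth v L 1, nth v L 0)] else [::]).

Inductive supp_reach (Xc : {set W}) :
    {set W} -> seq (W * W) -> {set W} -> seq (W * W) -> Prop :=
| sr_refl (S : {set W}) (E : seq (W * W)) : supp_reach Xc S E S E
| sr_step (S : {set W}) (E : seq (W * W)) (v : W) (S' : {set W}) (E' : seq (W * W)) :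
    v \in S -> v \notin Xc -> mdeg E v <= 2 ->
    supp_reach Xc (S :\ v) (suppress E v) S' E' ->
    supp_reach Xc S E S' E'.

Definition supp_terminal (Xc S : {set W}) (E : seq (W * W)) : Prop :=
  forall v, v \in S -> v \notin Xc -> 2 < mdeg E v.

End Suppress.

(* tcw(G) <= k : some tree-cut decomposition has all adhesions <= k and all
   3-centers (every result of exhaustive suppression) of size <= k *)
Definition tcw_le (V : finType) (G : rel V) (k : nat) : Prop :=
  exists (tT : finType) (tE : rel tT) (X : tT -> {set V}),
    [/\ is_tcd G tE X,
        (forall u v, tE u v -> adh G tE X u v <= k) &
        (forall t S E,
            supp_reach ((fun x => inl x : TW V tT) @: X t)
                       (torso_V tE X t) (torso_E G tE X t) S E ->
            supp_terminal ((fun x => inl x : TW V tT) @: X t) S E ->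
            #|S| <= k)].

Definition tcw_is (V : finType) (G : rel V) (k : nat) : Prop :=
  tcw_le G k /\ forall k', tcw_le G k' -> k <= k'.

Definition ecrw_le (alpha : nat) (V : finType) (G : rel V) (m : nat) : Prop :=
  exists (tT : finType) (tE : rel tT) (X : tT -> {set V}),
    [/\ is_tcd G tE X,
        (forall t, #|X t| <= alpha) &
        (forall t, cross G tE X t <= m)].

(* Main.v *)
Require Import Defs.
From mathcomp Require Import all_boot.
From Stdlib Require Import Classical.
Set Implicit Arguments. Unset Strict Implicit. Unset Printing Implicit Defensive.

Lemma iso_conn (T : finType) (e : rel T) x y :
  (forall z, ~~ e x z) -> connect e x y -> y = x.
Proof.
move=> H /connectP [[|z s]] /=; first by move=> _ ->.
by rewrite (negbTE (H z)).
Qed.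

Lemma del_sym (T : finType) (e : rel T) a b :
  symmetric e -> symmetric (del_edge e a b).
Proof. by move=> He x y; rewrite /del_edge /= He setUC. Qed.

Section Supp.
Variable W : finType.
Definition Inv (Xc : {set W}) (E : seq (W * W)) :=
  (forall p, p \in E -> p.1 \notin Xc -> p.2 \in Xc) /\
  (forall z, z \notin Xc -> mdeg E z <= 2).

Lemma inv_suppress Xc E v : Inv Xc E -> v \notin Xc -> Inv Xc (suppress E v).
Proof.
move=> [H1 H2] Hv.
have HL : forall y, y \in nbrs E v -> y \in Xc.
  move=> y /mapP [p]; rewrite mem_filter => /andP [/eqP Hp pE] ->.
  by apply: H1 => //; rewrite Hp.
rewrite /suppress; set ex := (if _ then _ else _).
have Hex : forall p, p \in ex -> p.1 \in Xc.
  rewrite /ex; case: ifP => // /andP [/eqP Hs _] p.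
  have h0 : nth v (nbrs E v) 0 \in Xc by apply/HL/mem_nth; rewrite Hs.
  have h1 : nth v (nbrs E v) 1 \in Xc by apply/HL/mem_nth; rewrite Hs.
  by rewrite !inE => /orP [] /eqP ->.
split.
  move=> p; rewrite mem_cat => /orP [].
    by rewrite mem_filter => /andP [_ /H1].
  by move=> /Hex ->.
move=> z Hz; rewrite /mdeg count_cat.
rewrite (@eq_in_count _ _ pred0 ex); last first.
  move=> p /Hex Hp /=; apply/eqP => e; by rewrite -e Hp in Hz.
rewrite count_pred0 addn0 count_filter.
apply: leq_trans (H2 _ Hz); apply: sub_count => p /= /andP [] //.
Qed.

Lemma inv_reach Xc S E S' E' :
  supp_reach Xc S E S' E' -> Inv Xc E -> Inv Xc E'.
Proof.
elim => // S0 E0 v S1 E1 _ Hv _ _ IH H.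
by apply: IH; apply: inv_suppress.
Qed.

Lemma reach_sub (Xc S : {set W}) E S' E' :
  supp_reach Xc S E S' E' -> S' \subset S.
Proof.
elim => [S0 E0|S0 E0 v S1 E1 _ _ _ _ IH]; first by apply/subsetP.
exact: subset_trans IH (subD1set S0 v).
Qed.
End Supp.

Section Gk.
Variables n k : nat.
Definition Bt := ('I_n * 'I_n * 'I_k)%type.
Definition VG := ('I_n + Bt)%type.
Definition adjB (i : 'I_n) (w : Bt) : bool := (i == w.1.1) || (i == w.1.2).
Definition Gk : rel VG := fun x y =>
  match x, y with
  | inl i, inr w => adjB i w
  | inr w, inl i => adjB i w
  | _, _ => false
  end.
Lemma Gk_sym : symmetric Gk. Proof. by case=> [?|?] [?|?]. Qed.
Lemma Gk_irr : irreflexive Gk. Proof. by case. Qed.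

Definition tTs := option Bt.
Definition tEs : rel tTs := fun a b =>
  match a, b with Some _, None | None, Some _ => true | _, _ => false end.
Definition Xs (t : tTs) : {set VG} :=
  match t with None => [set inl i | i : 'I_n] | Some w => [set inr w] end.

Lemma tEs_sym : symmetric tEs. Proof. by case=> [?|] [?|]. Qed.

Lemma conn_None a : connect tEs a None.
Proof. case: a => [w|]; [exact: connect1 | exact: connect0]. Qed.

Lemma del_iso w a b : [set a; b] = [set Some w; None] ->
  forall z, ~~ del_edge tEs a b (Some w) z.
Proof.
move=> Hab [w'|] //=; by rewrite /del_edge /= Hab eqxx.
Qed.

Lemma is_tree_s : is_tree tEs.
Proof.
split.
- by apply/card_gt0P; exists None.
- exact: tEs_sym.
- by case.
- move=> a b; apply: connect_trans (conn_None a) _.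
  rewrite (sym_connect_sym tEs_sym); exact: conn_None.
- case=> [w1|] [w2|] //= _.
  + apply/negP => /(iso_conn (del_iso (erefl _))).
    done.
  + rewrite (sym_connect_sym (del_sym _ _ tEs_sym)).
    apply/negP => /(iso_conn (del_iso (setUC _ _))). done.
Qed.

Lemma is_tcd_s : is_tcd Gk tEs Xs.
Proof.
split; first exact: is_tree_s.
- case=> [w1|] [w2|] //= H.
  + rewrite disjoints1 inE; apply: contra H => /eqP [->] //.
  + rewrite disjoints1; apply/imsetP => [[i _ //]].
  + rewrite disjoint_sym disjoints1; apply/imsetP => [[i _ //]].
- apply/setP => x; rewrite in_setT; apply/bigcupP.
  case: x => [i|w]; first by exists None => //; apply: imset_f.
  by exists (Some w) => //; rewrite /= inE.
Qed.

Lemma side_s w : side tEs Xs (Some w) None \subset [set inr w].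
Proof.
apply/subsetP => x; rewrite inE => /existsP [s /andP [Hx Hc]].
by move: Hc Hx => /(iso_conn (del_iso (erefl _))) ->.
Qed.

Lemma adh_s u v : tEs u v -> adh Gk tEs Xs u v <= n.
Proof.
suff H : forall u v w, (u = Some w /\ v = None) \/ (u = None /\ v = Some w) ->
  adh Gk tEs Xs u v <= n.
  by case: u v => [w|] [w'|] // _; [apply: (H _ _ w); left | apply: (H _ _ w'); right].
move=> {}u {}v w Hw.
  apply: (@leq_trans #|[set ([set inl i; inr w] : {set VG}) | i : 'I_n]|); last first.
    by apply: leq_trans (leq_imset_card _ _) _; rewrite card_ord.
  apply: subset_leq_card; apply/subsetP => e; rewrite inE.
  case/existsP => x /existsP [y /and4P [Gxy /eqP -> Hx Hy]].
  case: Hw => [[Hu Hv]|[Hu Hv]]; subst u v.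
  + move: Hx => /(subsetP (side_s w)); rewrite inE => /eqP ?; subst x.
    case: y Gxy {Hy} => [i|//] _.
    by apply/imsetP; exists i => //; rewrite setUC.
  + move: Hy => /(subsetP (side_s w)); rewrite inE => /eqP ?; subst y.
    case: x Gxy {Hx} => [i|//] _.
    by apply/imsetP; exists i.
Qed.

Lemma conn_leaf w a b : a != Some w -> b != Some w ->
  connect (Tminus tEs (Some w)) a b.
Proof.
have H : forall a, a != Some w -> connect (Tminus tEs (Some w)) a None.
  case=> [w1|] H; last exact: connect0.
  by apply: connect1; rewrite /Tminus /= H.
move=> Ha Hb; apply: connect_trans (H _ Ha) _.
rewrite (sym_connect_sym (T:=tTs)); first exact: H.
by move=> x y; rewrite /Tminus /= tEs_sym [(y != _) && _]andbC.
Qed.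

Definition TWs := TW VG tTs.

Lemma torso_leaf w : torso_V tEs Xs (Some w) \subset
  [set (inl (inr w) : TWs); inr [set r | r != Some w]].
Proof.
apply/subsetP => x; rewrite /torso_V; case/setUP => /imsetP [y Hy ->].
  by move: Hy; rewrite /= inE => /eqP ->; rewrite !inE eqxx.
rewrite !inE; apply/orP; right; apply/eqP; congr inr.
apply/setP => r; rewrite /compT !inE; case Hr: (r != Some w) => //=.
apply: conn_leaf => //; by move: Hy; rewrite !inE.
Qed.

Definition Xc0 : {set TWs} := (fun x => inl x : TWs) @: Xs None.

Lemma phi_inl i : phi tEs Xs None (inl i) = inl (inl i).
Proof. by rewrite /phi imset_f. Qed.

Lemma phi_inr w : phi tEs Xs None (inr w) =
  inr [set r | (r != None) &&
     [exists s, (inr w \in Xs s) && connect (Tminus tEs None) s r]].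
Proof.
rewrite /phi ifF //; apply/imsetP => [[i _ //]].
Qed.

Lemma inr_notXc w : phi tEs Xs None (inr w) \notin Xc0.
Proof. by rewrite phi_inr; apply/imsetP => [[x _ //]]. Qed.

Lemma inl_Xc i : (inl (inl i) : TWs) \in Xc0.
Proof. by apply: imset_f; apply: imset_f. Qed.

Lemma phi_inj w1 w2 : phi tEs Xs None (inr w1) = phi tEs Xs None (inr w2) -> w1 = w2.
Proof.
rewrite !phi_inr => [[]] /setP /(_ (Some w1)); rewrite !inE /=.
have -> : [exists s, (inr w1 \in Xs s) && connect (Tminus tEs None) s (Some w1)].
  by apply/existsP; exists (Some w1); rewrite /= inE eqxx connect0.
case/esym/existsP => s /andP [].
case: s => [w3|]; last by move=> /imsetP [? _].
rewrite /= inE => /eqP [<-] /(iso_conn (x:=Some w2)) H.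
suff : Some w1 = Some w2 by case.
by apply: H => -[w4|] //; rewrite /Tminus /= andbF.
Qed.

Lemma inv_root : Inv Xc0 (torso_E Gk tEs Xs None).
Proof.
split.
  move=> p /mapP [[x y]]; rewrite mem_filter mem_enum inE /= => /andP [_ Gxy] ->.
  case: x y Gxy => [i|w] [j|w'] //= _; rewrite ?phi_inl ?inl_Xc //.

move=> z Hz; rewrite /mdeg /torso_E count_map -size_filter.
case: (pickP (fun w => phi tEs Xs None (inr w) == z)) => [w Hw|Hn].
  apply: leq_trans (uniq_leq_size (s2 := [:: (inr w, inl w.1.1); (inr w, inl w.1.2)]) _ _) _ => //.
    by do 2 apply: filter_uniq; apply: enum_uniq.
  move=> [x y]; rewrite !mem_filter /= => /and4P [Hx _ Gxy _].
  move: Gxy; rewrite inE /=.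
  case: x y Hx => [i|w'] [j|w''] //= Hx.
    by move: Hz; rewrite -(eqP Hx) phi_inl inl_Xc.
  rewrite -(eqP Hw) in Hx; rewrite (phi_inj (eqP Hx)) => /orP [] /eqP ->;
    by rewrite !inE eqxx ?orbT.
apply: leq_trans (uniq_leq_size (s2 := [::]) _ _) _ => //.
  by do 2 apply: filter_uniq; apply: enum_uniq.
move=> [x y]; rewrite !mem_filter /= => /and4P [Hx _ _ _].
case: x Hx => [i|w'] Hx.
  by move: Hz; rewrite -(eqP Hx) phi_inl inl_Xc.
by rewrite Hn in Hx.
Qed.

Lemma tcw_Gk : 1 < n -> tcw_le Gk n.
Proof.
move=> Hn; exists tTs, tEs, Xs; split; first exact: is_tcd_s.
  exact: adh_s.
move=> [w|] S E Hr Ht.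
  apply: leq_trans (subset_leq_card (subset_trans (reach_sub Hr) (torso_leaf w))) _.
  by rewrite cards2.
have [_ HI] := inv_reach Hr inv_root.
have HS : S \subset Xc0.
  apply/subsetP => v Hv; apply/negPn/negP => Hnv.
  by have := Ht v Hv Hnv; rewrite ltnNge HI.
apply: leq_trans (subset_leq_card HS) _.
apply: leq_trans (leq_imset_card _ _) _.
apply: leq_trans (leq_imset_card _ _) _.
by rewrite card_ord.
Qed.
End Gk.

Lemma path_del (T : finType) (e : rel T) (p y : T) x s :
  path e x s -> p \notin x :: s -> path (del_edge e p y) x s.
Proof.
elim: s x => //= z s IH x /andP [Hxz Hs]; rewrite !inE negb_or => /andP [Hpx Hrest].
rewrite IH // andbT /del_edge /= Hxz /=.
apply/negP => /eqP Hset.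
have : p \in [set x; z] by rewrite Hset !inE eqxx.
rewrite !inE; move: Hrest; rewrite negb_or => /andP [Hpz _].
by rewrite (negbTE Hpx) (negbTE Hpz).
Qed.

Lemma Tminus_sub (T : finType) (e : rel T) t a b : t \in [set a; b] ->
  forall x y, connect (Tminus e t) x y -> connect (del_edge e a b) x y.
Proof.
move=> Ht; apply: connect_sub => x y /and3P [Hxy Hx Hy].
apply: connect1; rewrite /del_edge /= Hxy /=.
apply/negP => /eqP Hs; move: Ht; rewrite -Hs !inE.
by rewrite eq_sym (negbTE Hx) eq_sym (negbTE Hy).
Qed.

Lemma ecrw_big alpha M : ~ ecrw_le alpha (@Gk alpha.+1 (2 * M + 2 * alpha).+1) M.
Proof.
set n := alpha.+1; set K := (2 * M + 2 * alpha).+1.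
move=> [tT [tE [X [[[tne tsym tirr tconn tbr] _ Xcov] Xsz Xcr]]]].
case/card_gt0P: tne => t0 _.
pose s (x : VG n K) := odflt t0 [pick t | x \in X t].
have sX x : x \in X (s x).
  rewrite /s; case: pickP => //= H; exfalso.
  have : x \in \bigcup_(t : tT) X t by rewrite Xcov inE.
  by case/bigcupP => t _; rewrite H.
have [i [j Hij]] : exists i j : 'I_n, s (inl i) != s (inl j).
  case: (boolP [exists i : 'I_n, [exists j : 'I_n, s (inl i) != s (inl j)]]).
    by move=> /existsP [i /existsP [j H]]; exists i, j.
  move=> H; exfalso.
  have Hall : forall i : 'I_n, s (inl i) = s (inl ord0).
    move=> i; apply/eqP; move: H; apply: contraNT => H'.
    by apply/existsP; exists i; apply/existsP; exists ord0.
  have : #|[set (inl i : VG n K) | i : 'I_n]| <= alpha.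
    apply: leq_trans (Xsz (s (inl ord0))).
    apply: subset_leq_card; apply/subsetP => x /imsetP [i _ ->].
    by rewrite -(Hall i); apply: sX.
  by rewrite card_imset ?card_ord ?ltnn // => a b [].
set p := s (inl i); set q := s (inl j).
have := tconn p q; case/connectP => sq Hpath.
move: Hij; rewrite -/p -/q.
case/shortenP: Hpath => sq' Hp' Hu _.
case: sq' Hp' Hu => [|x1 s''] /=; first by move=> _ _ H E; rewrite E eqxx in H.
move=> /andP [Hpx1 Hs''] Hu Hpq Hlast.
set D := del_edge tE p x1.
have Dsym : connect_sym D by apply: sym_connect_sym; apply: del_sym.
have Hvq : connect D x1 q.
  apply/connectP; exists s'' => //; apply: path_del => //.
  by move: Hu; rewrite /= => /andP [].
have Hnuv : ~~ connect D p x1 := tbr _ _ Hpx1.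
have Hpx1n : p != x1 by apply: contraNneq Hnuv => <-; apply: connect0.
have Hqp : q != p by rewrite eq_sym.
have Hqx : connect D p q -> False.
  by move=> H; move/negP: Hnuv; apply; apply: connect_trans H _; rewrite Dsym.
pose w (m : 'I_K) : Bt n K := (i, j, m).
pose sm m := s (inr (w m)).
have injE : forall c : 'I_n, injective (fun m => [set inr (w m); inl c] : {set VG n K}).
  move=> c m1 m2 /setP /(_ (inr (w m1))); rewrite !inE eqxx /= orbF.
  by move=> /esym /eqP [].
have HN : forall t, #|[set m | sm m == t]| <= alpha.
  move=> t; apply: leq_trans (Xsz t).
  rewrite -(card_imset _ (f := fun m => inr (w m) : VG n K)); last by move=> a b [].
  apply: subset_leq_card; apply/subsetP => x /imsetP [m]; rewrite inE => /eqP <- ->.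
  exact: sX.
have HWu : #|[set m | (sm m != p) && connect D p (sm m)]| <= M.
  apply: leq_trans (Xcr p).
  rewrite -(card_imset _ (injE j)).
  apply: subset_leq_card; apply/subsetP => e /imsetP [m]; rewrite inE => /andP [H1 H2] ->.
  rewrite inE; apply/existsP; exists (inr (w m)); apply/existsP; exists (inl j).
  rewrite /= /adjB /= eqxx orbT eqxx /=.
  apply/existsP; exists (sm m); apply/existsP; exists q.
  rewrite sX /q sX H1 -/q Hqp /=.
  apply/negP => /(Tminus_sub (set21 p x1)) H3.
  by apply: Hqx; apply: connect_trans H2 H3.
have HWv : #|[set m | (sm m != x1) && ~~ connect D p (sm m)]| <= M.
  apply: leq_trans (Xcr x1).
  rewrite -(card_imset _ (injE i)).
  apply: subset_leq_card; apply/subsetP => e /imsetP [m]; rewrite inE => /andP [H1 H2] ->.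
  rewrite inE; apply/existsP; exists (inr (w m)); apply/existsP; exists (inl i).
  rewrite /= /adjB /= eqxx eqxx /=.
  apply/existsP; exists (sm m); apply/existsP; exists p.
  rewrite sX /p sX H1 -/p Hpx1n /=.
  apply/negP => H3; have {H3}H3 := Tminus_sub (set22 p x1) H3.
  by move/negP: H2; apply; rewrite Dsym.
set Nu := [set m | sm m == p]; set Nv := [set m | sm m == x1].
set Wu := [set m | (sm m != p) && connect D p (sm m)].
set Wv := [set m | (sm m != x1) && ~~ connect D p (sm m)].
have Hsub : [set: 'I_K] \subset (Nu :|: Nv) :|: (Wu :|: Wv).
  apply/subsetP => m _; rewrite !inE.
  by case: (sm m == p); case: (sm m == x1); case: (connect D p (sm m)).
have := subset_leq_card Hsub; rewrite cardsT card_ord => HK.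
have := leq_trans HK (leq_card_setU _ _).1.
have := leq_add (leq_trans (leq_card_setU Nu Nv).1 (leq_add (HN p) (HN x1)))
                (leq_trans (leq_card_setU Wu Wv).1 (leq_add HWu HWv)).
move=> H1 H2; have := leq_trans H2 H1.
by rewrite /K !mul2n -!addnn addnC ltnn.
Qed.

Lemma min_ex (P : nat -> Prop) c : P c ->
  exists kk, kk <= c /\ P kk /\ forall k', P k' -> kk <= k'.
Proof.
elim/ltn_ind: c => c IH Pc.
case: (classic (exists k', k' < c /\ P k')) => [[k' [lt Pk']]|H].
  have [kk [le [Pk mn]]] := IH k' lt Pk'.
  by exists kk; split; [exact: leq_trans le (ltnW lt) | split].
exists c; split => //; split => // k' Pk'; rewrite leqNgt; apply/negP => lt.
by apply: H; exists k'.
Qed.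

Theorem lemma3p8 (alpha : nat) :
  0 < alpha ->
  ~ exists f : nat -> nat,
      forall (V : finType) (G : rel V),
        symmetric G -> irreflexive G ->
        forall k : nat, tcw_is G k -> ecrw_le alpha G (f k).
Proof.
move=> Ha [f Hf].
set M := \max_(j < alpha.+2) f j.
have Ht := @tcw_Gk alpha.+1 (2 * M + 2 * alpha).+1 (Ha : 1 < alpha.+1).
have [kk [Hle [Hkk Hmin]]] := min_ex Ht.
have := Hf _ _ (@Gk_sym _ _) (@Gk_irr _ _) kk (conj Hkk Hmin).
move=> [tT [tE [X [H1 H2 H3]]]].
apply: (@ecrw_big alpha M); exists tT, tE, X; split => // t.
apply: leq_trans (H3 t) _.
have Hk : kk < alpha.+2 by [].
exact: (@leq_bigmax_cond _ xpredT (fun j : 'I_alpha.+2 => f j) (Ordinal Hk)).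
Qed.
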